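(* Let $m\ge1$, $n\ge1$ and let $P_1,\dots,P_m\in\mathcal{M}_n(\mathbb{C})$ be pairwise commuting matrices, i.e. $P_\alpha P_\beta=P_\beta P_\alpha$ for all $\alpha,\beta\in\{1,\dots,m\}$. Assume that one of the following holds: (i) each $P_\alpha$ is diagonalizable; or (ii) $n=2$ and each $P_\alpha$ is invertible. Let $k_1,\dots,k_m$ be positive integers. Then there exist matrices $Q_1,\dots,Q_m\in\mathcal{M}_n(\mathbb{C})$ such that (a) $Q_\alpha^{k_\alpha}=P_\alpha$ for all $\alpha\in\{1,\dots,m\}$, and (b) $Q_\alpha Q_\beta=Q_\beta Q_\alpha$ for all $\alpha,\beta\in\{1,\dots,m\}$. *)

(* Defs.v *)
(* The complex numbers are modelled as R[i] = complex R
   for an arbitrary R : realType (every realType is isomorphic to the reals,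
   so R[i] is (isomorphic to) C). *)
From HB Require Import structures.
From mathcomp Require Export all_boot all_order all_algebra.
From mathcomp Require Export reals.
From mathcomp Require Export complex.

(* Main.v *)
Require Import Defs.
From mathcomp Require Import ring.
Import GRing.Theory Num.Theory.
Local Open Scope ring_scope.

Lemma conj_exp (F : fieldType) n (V A : 'M[F]_n) j : V \in unitmx ->
  (invmx V *m A *m V) ^+ j = invmx V *m (A ^+ j) *m V.
Proof.
move=> Vu; elim: j => [|j IH].
  by rewrite !expr0 mulmx1 mulVmx.
rewrite !exprS IH -!mulmxE !mulmxA; congr (_ *m _).
by rewrite -!mulmxA mulKVmx.
Qed.

Lemma diag_exp (F : fieldType) n (d : 'rV[F]_n) j :
  diag_mx d ^+ j = diag_mx (\row_i (d 0 i ^+ j)).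
Proof.
elim: j => [|j IH].
  rewrite expr0; apply/matrixP => i l.
  rewrite !mxE expr0 /=. done.
rewrite exprS IH -mulmxE mulmx_diag; congr diag_mx; apply/matrixP => i l.
by rewrite !mxE exprS.
Qed.

Lemma caseI (C : numClosedFieldType) (m n : nat)
  (P : 'I_m -> 'M[C]_n) (k : 'I_m -> nat) :
  (forall a b : 'I_m, P a *m P b = P b *m P a) ->
  (forall a : 'I_m, diagonalizable (P a)) ->
  (forall a : 'I_m, (0 < k a)%N) ->
  exists Q : 'I_m -> 'M[C]_n,
    (forall a : 'I_m, Q a ^+ k a = P a) /\
    (forall a b : 'I_m, Q a *m Q b = Q b *m Q a).
Proof.
move=> Pc Pd kp.
have [V Vu /allP Vd] : codiagonalizable [seq P a | a <- enum 'I_m].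
  apply/codiagonalizableP; split.
    move=> f g /mapP[a _ ->] /mapP[b _ ->]; exact: Pc.
  by move=> f /mapP[a _ ->].
have hD a : exists D : 'rV_n, P a = invmx V *m diag_mx D *m V.
  have := Vd (P a) (map_f _ (mem_enum _ a)).
  move/(similar_diagLR Vu) => [D ->]; exists D.
  by rewrite conjumx ?unitmx_inv // invmxK.
pose D a := \row_j (V *m P a *m invmx V) j j.
have DE a : P a = invmx V *m diag_mx (D a) *m V.
  have [d Pd'] := hD a.
  have -> : D a = d.
    rewrite /D.
    have -> : V *m P a *m invmx V = diag_mx d.
      by rewrite Pd' !mulmxA mulmxV // mul1mx -mulmxA mulmxV // mulmx1.
    by apply/matrixP => i j; rewrite (ord1 i) !mxE eqxx mulr1n.
  exact: Pd'.
exists (fun a => invmx V *m diag_mx (\row_j (k a).-root (D a 0 j)) *m V); split.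
  move=> a; rewrite conj_exp // diag_exp DE; congr (_ *m diag_mx _ *m _).
  by apply/matrixP => i l; rewrite (ord1 i) !mxE rootCK.
move=> a b.
set A1 := diag_mx _; set B1 := diag_mx _.
have e : forall X Y : 'M_n, invmx V *m X *m V *m (invmx V *m Y *m V) = invmx V *m (X *m Y) *m V.
  by move=> X Y; rewrite !mulmxA -(mulmxA _ V) mulmxV // mulmx1.
by rewrite !e /A1 /B1 diag_mxC.
Qed.

Lemma alg_mul {F : fieldType} {n} {N : 'M[F]_n} {d} (HN : N *m N = d *: N) a b c e :
 (a%:M + b *: N) *m (c%:M + e *: N) = (a*c)%:M + (a*e + b*c + b*e*d) *: N.
Proof.
rewrite mulmxDl !mulmxDr !mul_scalar_mx mul_mx_scalar -scalemxAl -scalemxAr HN.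
by rewrite scale_scalar_mx !scalerA !scalerDl -!addrA (mulrC c b).
Qed.

Lemma alg_pow1 {F : fieldType} {n} {N : 'M[F]_n} {d} (HN : N *m N = d *: N) (dnz : d != 0) u v j :
  (u%:M + v *: N) ^+ j = (u ^+ j)%:M + (((u + v * d) ^+ j - u ^+ j) / d) *: N.
Proof.
elim: j => [|j IH].
  by rewrite !expr0 subrr mul0r scale0r addr0.
rewrite exprS IH -mulmxE (alg_mul HN); congr (_%:M + _ *: N).
  by rewrite exprS.
rewrite !exprS; field.
by [].
Qed.

Lemma alg_pow0 {F : fieldType} {n} {N : 'M[F]_n} (HN : N *m N = 0 *: N) u v (unz : u != 0) j :
  (u%:M + v *: N) ^+ j = (u ^+ j)%:M + (j%:R * u ^+ j * v / u) *: N.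
Proof.
elim: j => [|j IH].
  by rewrite !expr0 mul0r !mul0r scale0r addr0.
rewrite exprS IH -mulmxE (alg_mul HN); congr (_%:M + _ *: N).
  by rewrite exprS.
rewrite !exprS -addn1 natrD; field.
by [].
Qed.

Lemma alg_root (C : numClosedFieldType) n (N : 'M[C]_n) d (HN : N *m N = d *: N)
  x y k : (0 < k)%N -> x != 0 -> x + y * d != 0 ->
  exists u v, (u%:M + v *: N) ^+ k = x%:M + y *: N.
Proof.
move=> kp xnz xynz.
have [d0|dnz] := eqVneq d 0.
  pose u := k.-root x.
  have ux : u ^+ k = x by rewrite rootCK.
  have unz : u != 0.
    apply: contraNneq xnz => u0; by rewrite -ux u0 expr0n eqn0Ngt kp.
  have knz : (k%:R : C) != 0 by rewrite pnatr_eq0 -lt0n.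
  exists u, (y * u / (k%:R * x)).
  have HN0 : N *m N = 0 *: N by rewrite HN d0.
  rewrite (alg_pow0 HN0) // ux; congr (_%:M + _ *: N).
  field; by rewrite unz xnz knz.
pose u := k.-root x; pose w := k.-root (x + y * d).
exists u, ((w - u) / d).
rewrite (alg_pow1 HN) // rootCK //.
have -> : u + (w - u) / d * d = w by field.
rewrite rootCK //; congr (_%:M + _ *: N); field.
by [].
Qed.

Section S.
Variable C : numClosedFieldType.
Lemma mul2 (A B : 'M[C]_2) i j : (A *m B) i j = A i 0 * B 0 j + A i 1 * B 1 j.
Proof.
rewrite mxE !big_ord_recl big_ord0 addr0.
have -> : lift ord0 (ord0 : 'I_1) = 1 :> 'I_2 by apply: val_inj.
by [].
Qed.
Lemma eq2 (A B : 'M[C]_2) : A 0 0 = B 0 0 -> A 0 1 = B 0 1 -> A 1 0 = B 1 0 -> A 1 1 = B 1 1 -> A = B.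
Proof.
move=> h1 h2 h3 h4; apply/matrixP => i j.
have hi : forall l : 'I_2, l = 0 \/ l = 1.
  by move=> [[|[|//]] ?]; [left|right]; apply: val_inj.
by case: (hi i) => ->; case: (hi j) => ->.
Qed.
Lemma lin2 (N : 'M[C]_2) x y i j : (x%:M + y *: N) i j = x *+ (i == j) + y * N i j.
Proof. by rewrite !mxE. Qed.

Lemma centr2 (N B : 'M[C]_2) : [|| N 0 1 != 0, N 1 0 != 0 | N 0 0 != N 1 1] ->
  B *m N = N *m B -> exists x y, B = x%:M + y *: N.
Proof.
move=> ns H.
have e (i j : 'I_2) := congr1 (fun M : 'M[C]_2 => M i j) H.
have e00 := e 0 0; have e01 := e 0 1; have e10 := e 1 0; have e11 := e 1 1.
simpl in e00, e01, e10, e11. rewrite !mul2 in e00 e01 e10 e11.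
have o01 : ((0 : 'I_2) == 1) = false by [].
have o10 : ((1 : 'I_2) == 0) = false by [].
have lu (a b l r c : C) : a = b -> l - r = c * (a - b) -> l = r.
  by move=> -> h; apply/eqP; rewrite -subr_eq0 h subrr mulr0.
case/or3P: ns => [bnz|cnz|adnz].
- exists (B 0 0 - B 0 1 / N 0 1 * N 0 0), (B 0 1 / N 0 1).
  apply: eq2; rewrite lin2 ?eqxx ?o01 ?o10 /= ?mulr0n ?mulr1n.
  + by field.
  + by field.
  + by apply: (lu _ _ _ _ (- 1 / N 0 1) e00); field.
  + by apply: (lu _ _ _ _ (- 1 / N 0 1) e01); field.
- exists (B 0 0 - B 1 0 / N 1 0 * N 0 0), (B 1 0 / N 1 0).
  apply: eq2; rewrite lin2 ?eqxx ?o01 ?o10 /= ?mulr0n ?mulr1n.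
  + by field.
  + by apply: (lu _ _ _ _ (1 / N 1 0) e00); field.
  + by field.
  + by apply: (lu _ _ _ _ (1 / N 1 0) e10); field.
- have tnz : N 0 0 - N 1 1 != 0 by rewrite subr_eq0.
  exists (B 0 0 - (B 0 0 - B 1 1) / (N 0 0 - N 1 1) * N 0 0), ((B 0 0 - B 1 1) / (N 0 0 - N 1 1)).
  apply: eq2; rewrite lin2 ?eqxx ?o01 ?o10 /= ?mulr0n ?mulr1n.
  + by field.
  + by apply: (lu _ _ _ _ (- 1 / (N 0 0 - N 1 1)) e01); field.
  + by apply: (lu _ _ _ _ (1 / (N 0 0 - N 1 1)) e10); field.
  + by field.
Qed.

Lemma det2 (A : 'M[C]_2) : \det A = A 0 0 * A 1 1 - A 0 1 * A 1 0.
Proof.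
rewrite (expand_det_row _ 0) !big_ord_recl big_ord0 /cofactor !det_mx11 !mxE /=.
have l1 : lift (0:'I_2) (0:'I_1) = 1 by apply: val_inj.
have l2 : lift (lift (0:'I_2) (0:'I_1)) (0:'I_1) = 0 by apply: val_inj.
rewrite l2 l1 /bump /= expr0 expr1 mul1r addr0 mulN1r mulrN.
by [].
Qed.

Lemma caseII (m : nat) (P : 'I_m -> 'M[C]_2) (k : 'I_m -> nat) :
  (forall a b : 'I_m, P a *m P b = P b *m P a) ->
  (forall a : 'I_m, P a \in unitmx) ->
  (forall a : 'I_m, (0 < k a)%N) ->
  exists Q : 'I_m -> 'M[C]_2,
    (forall a : 'I_m, Q a ^+ k a = P a) /\
    (forall a b : 'I_m, Q a *m Q b = Q b *m Q a).
Proof.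
move=> Pc Pu kp.
have o01 : ((0 : 'I_2) == 1) = false by [].
have o10 : ((1 : 'I_2) == 0) = false by [].
case: (pickP (fun a => [|| P a 0 1 != 0, P a 1 0 != 0 | P a 0 0 != P a 1 1])) => [c cns | allsc].
  set A := P c.
  pose t := A 0 0 + A 1 1; pose dt := A 0 0 * A 1 1 - A 0 1 * A 1 0.
  pose s := sqrtC (t ^+ 2 - 4%:R * dt).
  have hs : s ^+ 2 = t ^+ 2 - 4%:R * dt by rewrite sqrtCK.
  pose al := (t + s) / 2%:R.
  pose N := A - al%:M.
  have NE i j : N i j = A i j - al *+ (i == j) by rewrite !mxE.
  have Ncomm b : P b *m N = N *m P b.
    by rewrite /N mulmxBr mulmxBl mul_mx_scalar mul_scalar_mx /A Pc.
  clearbody N.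
  have hdet : N 0 0 * N 1 1 - N 0 1 * N 1 0 = 0.
    rewrite !NE ?eqxx ?o01 ?o10 /= ?mulr0n ?mulr1n ?subr0.
    have -> : (A 0 0 - al) * (A 1 1 - al) - A 0 1 * A 1 0
       = (s ^+ 2 - (t ^+ 2 - 4%:R * dt)) / 4%:R.
      rewrite /al /t /dt; field.
      by [].
    by rewrite hs subrr mul0r.
  pose d := N 0 0 + N 1 1.
  have HN : N *m N = d *: N.
    apply: eq2; rewrite !mul2 !mxE.
    + rewrite /d; have h : N 0 1 * N 1 0 = N 0 0 * N 1 1.
        by apply/eqP; rewrite -subr_eq0 -opprB oppr_eq0 hdet.
      by rewrite h; ring.
    + by rewrite /d; ring.
    + by rewrite /d; ring.
    + rewrite /d; have h : N 1 0 * N 0 1 = N 0 0 * N 1 1.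
        by apply/eqP; rewrite mulrC -subr_eq0 -opprB oppr_eq0 hdet.
      by rewrite h; ring.
  have Nns : [|| N 0 1 != 0, N 1 0 != 0 | N 0 0 != N 1 1].
    rewrite !NE ?eqxx ?o01 ?o10 /= ?mulr0n ?mulr1n ?subr0.
    by rewrite (can_eq (subrK al)).
  have ex b : exists uv : C * C, (uv.1%:M + uv.2 *: N) ^+ k b = P b.
    have [x [y Pb]] := centr2 N (P b) Nns (Ncomm b).
    have := Pu b; rewrite unitmxE unitfE det2 Pb !lin2 ?eqxx ?o01 ?o10 /= ?mulr0n ?mulr1n ?add0r.
    have -> : (x + y * N 0 0) * (x + y * N 1 1) - y * N 0 1 * (y * N 1 0)
       = x * (x + y * d) + y ^+ 2 * (N 0 0 * N 1 1 - N 0 1 * N 1 0) by rewrite /d; ring.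
    rewrite hdet mulr0 addr0 mulf_eq0 negb_or => /andP[xnz xynz].
    have [u [v huv]] := alg_root _ _ _ _ HN _ _ _ (kp b) xnz xynz.
    by exists (u, v).
  have [uv huv] := fin_all_exists ex.
  exists (fun a => (uv a).1%:M + (uv a).2 *: N); split => // a b.
  rewrite !(alg_mul HN); congr (_%:M + _ *: N); first by rewrite mulrC.
  by ring.
apply: caseI => // a.
have -> : P a = (P a 0 0)%:M.
  have /negbT := allsc a; rewrite /= !negb_or !negbK => /and3P[/eqP h1 /eqP h2 /eqP h3].
  apply: eq2; rewrite !mxE ?eqxx ?o01 ?o10 /= ?mulr0n ?mulr1n //.
exact: diagonalizable_scalar.
Qed.
End S.

Theorem proposition2p9 (R : realType) (m n : nat)
  (P : 'I_m -> 'M[R[i]]_n) (k : 'I_m -> nat) :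
  (0 < m)%N -> (0 < n)%N ->
  (forall a b : 'I_m, P a *m P b = P b *m P a) ->
  ((forall a : 'I_m, diagonalizable (P a)) \/
   (n = 2%N /\ forall a : 'I_m, P a \in unitmx)) ->
  (forall a : 'I_m, (0 < k a)%N) ->
  exists Q : 'I_m -> 'M[R[i]]_n,
    (forall a : 'I_m, Q a ^+ k a = P a) /\
    (forall a b : 'I_m, Q a *m Q b = Q b *m Q a).
Proof.
move=> _ _ Pc [Pd|[n2 Pu]] kp.
  exact: caseI.
subst n; exact: caseII.
Qed.
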